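(* Let $(A;R)\in\mathcal C$, let $t:R\to A$ be a transversal with image $A\setminus Y$, and let $F\subseteq A$ with $F\le A$. Then $$Z=\{f\in F\setminus Y: t^{-1}(f)\not\subseteq F\}\cup(F\cap Y)$$ is a basis for $F$ in the pregeometry $PG(A;R)$.
   Context: A set system is a pair $(A;R)$ where $A$ is a set and $R$ is a set of finite non-empty subsets of $A$. For finite $X\subseteq A$ write $R[X]=\{r\in R: r\subseteq X\}$ and define the predimension $\delta(X)=|X|-|R[X]|$. $\mathcal C$ is the class of finite set systems with $\delta(X)\ge 0$ for all $X\subseteq A$. For $X\subseteq A$, $X\le A$ means $\delta(X)\le\delta(X')$ for all $X'$ with $X\subseteq X'\subseteq A$. Define $d(X)=\min\{\delta(Y): X\subseteq Y\subseteq A\}$ and $\mathrm{cl}(X)=\{y\in A: d(X\cup\{y\})=d(X)\}$; $(A,\mathrm{cl})$ is a pregeometry with rank function $d$, denoted $PG(A;R)$. A transversal of $(A;R)$ is an injective function $t:R\to A$ with $t(r)\in r$ for all $r\in R$. *)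

(* Defs.v *)
(* A finite set system (A;R) is modelled with A = the whole
   finite type T and R : {set {set T}}. *)
From HB Require Import structures.
From mathcomp Require Import all_boot all_order all_algebra.
Set Implicit Arguments. Unset Strict Implicit. Unset Printing Implicit Defensive.
Import Order.TTheory GRing.Theory Num.Theory.

Section SetSystems.
Variable T : finType.
Variable R : {set {set T}}.

Definition ss_set_system : Prop := forall r, r \in R -> r != set0.

Definition ss_RX (X : {set T}) : {set {set T}} := [set r in R | r \subset X].

Definition ss_delta (X : {set T}) : int := (#|X|%:Z - #|ss_RX X|%:Z)%R.

Definition ss_inC : Prop := ss_set_system /\ forall X : {set T}, (0 <= ss_delta X)%R.

Definition ss_ssuff (X : {set T}) : Prop :=
  forall X' : {set T}, X \subset X' -> (ss_delta X <= ss_delta X')%R.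

Definition ss_dim (X : {set T}) : int :=
  \big[Order.min/ss_delta setT]_(Y : {set T} | X \subset Y) ss_delta Y.

Definition ss_cl (X : {set T}) : {set T} := [set y | ss_dim (y |: X) == ss_dim X].

Definition ss_independent (Z : {set T}) : Prop :=
  forall z, z \in Z -> z \notin ss_cl (Z :\ z).

Definition ss_basis_of (Z F : {set T}) : Prop :=
  [/\ Z \subset F, ss_independent Z & F \subset ss_cl Z].

Definition ss_transversal (t : {set T} -> T) : Prop :=
  {in R &, injective t} /\ forall r, r \in R -> t r \in r.

End SetSystems.

(* Main.v *)
Require Import Defs.
From mathcomp Require Import all_boot all_order all_algebra.
From mathcomp Require Import zify.
Set Implicit Arguments. Unset Strict Implicit. Unset Printing Implicit Defensive.
Import Order.TTheory GRing.Theory Num.Theory.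

Section Aux.
Variables (T : finType) (R : {set {set T}}).

Lemma dim_le (X W : {set T}) : X \subset W -> (ss_dim R X <= ss_delta R W)%R.
Proof.
move=> XW; rewrite /ss_dim (bigD1 W) //=.
by rewrite ge_min lexx.
Qed.

Lemma dim_ge (X : {set T}) (c : int) :
  (forall W : {set T}, X \subset W -> (c <= ss_delta R W)%R) -> (c <= ss_dim R X)%R.
Proof.
move=> H; rewrite /ss_dim; apply: (big_ind (fun v => c <= v)%R).
- exact: (H setT (subsetT X)).
- by move=> a b ha hb; rewrite le_min ha hb.
- by move=> W XW; exact: (H W XW).
Qed.

Lemma delta_le_card (W : {set T}) : (ss_delta R W <= #|W|%:Z)%R.
Proof. rewrite /ss_delta; lia. Qed.

Lemma RX_I (W F : {set T}) : ss_RX R (W :&: F) = ss_RX R W :&: ss_RX R F.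
Proof.
apply/setP=> r; rewrite !inE subsetI.
by case: (r \in R).
Qed.

Lemma RX_U (W F : {set T}) : ss_RX R W :|: ss_RX R F \subset ss_RX R (W :|: F).
Proof.
apply/subsetP=> r; rewrite !inE => /orP [/andP [-> H]|/andP [-> H]] /=.
- exact: subset_trans H (subsetUl _ _).
- exact: subset_trans H (subsetUr _ _).
Qed.

Lemma submod (W F : {set T}) :
  (ss_delta R (W :|: F) + ss_delta R (W :&: F) <= ss_delta R W + ss_delta R F)%R.
Proof.
rewrite /ss_delta.
have h1 := cardsUI W F.
have h2 := cardsUI (ss_RX R W) (ss_RX R F).
have h3 := subset_leq_card (RX_U W F).
rewrite -RX_I in h2.
lia.
Qed.

End Aux.

Theorem corollary2p3 (T : finType) (R : {set {set T}})
  (t : {set T} -> T) (Y F : {set T}) :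
  ss_inC R ->
  ss_transversal R t ->
  [set t r | r in R] = ~: Y ->
  ss_ssuff R F ->
  ss_basis_of R
    ([set f in F :\: Y | [exists r in R, (t r == f) && ~~ (r \subset F)]]
       :|: (F :&: Y))
    F.
Proof.
move=> _ [tinj tin] timg Fss.
set Z := _ :|: _.
have ZF : Z \subset F.
  apply/subsetP=> x; rewrite !inE => /orP [/andP [/andP [_ ->] _]|/andP [->]] //.
have tnY : forall r, r \in R -> t r \notin Y.
  move=> r rR; have : t r \in [set t r | r in R] by apply: imset_f.
  by rewrite timg inE.
have L7 : forall W : {set T}, Z \subset W -> W \subset F -> (#|Z|%:Z <= ss_delta R W)%R.
  move=> W ZW WF.
  have disj : Z :&: [set t r | r in ss_RX R W] = set0.
    apply/setP=> x; rewrite in_setI in_set0; apply/negP=> /andP [xZ /imsetP [r]].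
    rewrite inE => /andP [rR rW] ex.
    move: xZ; rewrite ex.
    rewrite !inE (negbTE (tnY r rR)) /= andbF orbF.
    case/andP=> _ /existsP [r' /andP [r'R /andP [/eqP e nsub]]].
    have er : r' = r by apply: tinj.
    by move: nsub; rewrite er (subset_trans rW WF).
  have sub : Z :|: [set t r | r in ss_RX R W] \subset W.
    rewrite subUset ZW /=; apply/subsetP=> x /imsetP [r]; rewrite inE.
    by case/andP=> rR rW ->; apply: (subsetP rW); apply: tin.
  have cimg : #|[set t r | r in ss_RX R W]| = #|ss_RX R W|.
    apply: card_in_imset=> a b; rewrite !inE => /andP [aR _] /andP [bR _].
    exact: tinj.
  have := subset_leq_card sub.
  rewrite cardsU disj cards0 subn0 cimg /ss_delta.
  lia.
have L6 : (ss_delta R F <= #|Z|%:Z)%R.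
  have sub : F \subset Z :|: [set t r | r in ss_RX R F].
    apply/subsetP=> x xF; rewrite inE.
    case xZ: (x \in Z) => //=.
    have xnY : x \notin Y.
      by apply/negP=> xY; move: xZ; rewrite /Z !inE xF xY /= ?andbT ?orbT.
    have : x \in [set t r | r in R] by rewrite timg inE.
    case/imsetP=> r rR ex; apply/imsetP; exists r => //.
    rewrite inE rR /=; case nsub: (r \subset F) => //; move: xZ.
    rewrite /Z !inE xF xnY /= => /negbT; case/negP; apply/orP; left.
    by apply/existsP; exists r; rewrite rR ex eqxx nsub.
  have h1 := subset_leq_card sub.
  have h2 : #|[set t r | r in ss_RX R F]| <= #|ss_RX R F| by exact: leq_imset_card.
  have h3 := cardsUI Z [set t r | r in ss_RX R F].
  have h4 : #|F| <= #|Z| + #|ss_RX R F|.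
    apply: (leq_trans h1); apply: (leq_trans (leq_addr #|Z :&: [set t r | r in ss_RX R F]| _)).
    by rewrite h3 leq_add2l.
  rewrite /ss_delta; lia.
have dZ : (#|Z|%:Z <= ss_dim R Z)%R.
  apply: dim_ge => W ZW.
  have := submod R W F.
  have := Fss (W :|: F) (subsetUr _ _).
  have := L7 (W :&: F) _ (subsetIr _ _).
  rewrite subsetI ZW ZF => /(_ isT).
  move=> a b c; apply: (le_trans a).
  rewrite -(lerD2l (ss_delta R (W :|: F))).
  apply: (le_trans c); rewrite addrC lerD2r //.
split=> //.
- move=> z zZ; rewrite inE (setD1K zZ); apply/negP=> /eqP e.
  have := dim_le R (subxx (Z :\ z)).
  have := delta_le_card R (Z :\ z).
  have := cardsD1 z Z; rewrite zZ => hc.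
  move=> h1 h2; have := le_trans h2 h1; move: dZ; rewrite e; lia.
- apply/subsetP=> y yF; rewrite inE; apply/eqP/le_anti.
  rewrite andbC; apply/andP; split.
    apply: dim_ge => W yZW; apply: dim_le.
    exact: subset_trans (subsetUr _ _) yZW.
  apply: (le_trans (dim_le R (X:=y |: Z) (W:=F) _)).
    by rewrite subUset sub1set yF ZF.
  exact: le_trans L6 dZ.
Qed.
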